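(* Let $S$ be a topological semigroup and $e\in S$ a balanced open right unit of $S$. Then $S$ has open left shifts and open right shifts. If moreover $S$ is a $T_1$-space, then $e$ is an open left unit of $S$ (in particular $e$ is a unit and $S$ is a balanced topological monoid).
   Context: A topological semigroup is a topological space with a continuous associative multiplication. $e$ is a right unit if $xe=x$ for all $x\in S$, a left unit if $ex=x$ for all $x$, a unit if both. A right unit $e$ is an open right unit if $xU$ is a neighborhood of $x$ for every neighborhood $U$ of $e$ and every $x\in S$; a left unit is an open left unit if $Ux$ is a neighborhood of $x$ for every such $U$ and $x$. A subset $U\subset S$ is invariant if $xU=Ux$ for all $x\in S$. A point $e$ is balanced if it has a neighborhood base consisting of open invariant neighborhoods; a balanced open right unit is an open right unit which is a balanced point. A topological monoid (semigroup with unit) is balanced if its unit is a balanced point. $S$ has open left (right) shifts if $x\mapsto ax$ (resp. $x\mapsto xa$) is an open map for every $a\in S$. *)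

(* Defs.v *)
From HB Require Import structures.
From mathcomp Require Import all_boot all_order.
From mathcomp Require Import all_classical all_reals all_analysis.
Set Implicit Arguments. Unset Strict Implicit. Unset Printing Implicit Defensive.
Local Open Scope classical_set_scope.

Definition topological_semigroup (T : topologicalType) (mul : T -> T -> T) :=
  (forall x y z, mul x (mul y z) = mul (mul x y) z) /\
  continuous (fun p : T * T => mul p.1 p.2).

Definition right_unit (T : Type) (mul : T -> T -> T) (e : T) :=
  forall x, mul x e = x.
Definition left_unit (T : Type) (mul : T -> T -> T) (e : T) :=
  forall x, mul e x = x.

Definition lmulset (T : Type) (mul : T -> T -> T) (x : T) (U : set T) :=
  [set mul x u | u in U].
Definition rmulset (T : Type) (mul : T -> T -> T) (U : set T) (x : T) :=
  [set mul u x | u in U].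

Definition open_right_unit (T : topologicalType) (mul : T -> T -> T) (e : T) :=
  right_unit mul e /\
  forall U x, nbhs e U -> nbhs x (lmulset mul x U).

Definition open_left_unit (T : topologicalType) (mul : T -> T -> T) (e : T) :=
  left_unit mul e /\
  forall U x, nbhs e U -> nbhs x (rmulset mul U x).

Definition invariant (T : Type) (mul : T -> T -> T) (U : set T) :=
  forall x, lmulset mul x U = rmulset mul U x.

Definition balanced_point (T : topologicalType) (mul : T -> T -> T) (e : T) :=
  forall U, nbhs e U ->
    exists V : set T, [/\ open V, V e, invariant mul V & V `<=` U].

Definition balanced_open_right_unit (T : topologicalType) (mul : T -> T -> T)
  (e : T) := open_right_unit mul e /\ balanced_point mul e.

Definition open_map (T : topologicalType) (f : T -> T) :=
  forall U : set T, open U -> open (f @` U).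

Definition open_left_shifts (T : topologicalType) (mul : T -> T -> T) :=
  forall a, open_map (fun x => mul a x).
Definition open_right_shifts (T : topologicalType) (mul : T -> T -> T) :=
  forall a, open_map (fun x => mul x a).

(* Main.v *)
Require Import Defs.
From mathcomp Require Import all_boot all_order.
From mathcomp Require Import all_classical all_reals all_analysis.
Local Open Scope classical_set_scope.

Lemma mul_nbhs (T : topologicalType) (mul : T -> T -> T) a b (W : set T) :
  continuous (fun p : T * T => mul p.1 p.2) -> nbhs (mul a b) W ->
  exists P Q, [/\ nbhs a P, nbhs b Q & forall x y, P x -> Q y -> W (mul x y)].
Proof.
move=> c hW; have := c (a, b) _ hW.
move=> [[P Q] [Pa Qb] sub]; exists P, Q; split => // x y Px Qy.
exact: (sub (x, y)).
Qed.

Lemma section_nbhs (T : topologicalType) (mul : T -> T -> T) e w (W : set T) :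
  continuous (fun p : T * T => mul p.1 p.2) -> nbhs (mul w e) W ->
  exists U, nbhs e U /\ lmulset mul w U `<=` W.
Proof.
move=> c /(@mul_nbhs _ _ _ _ _ c) [P [Q [Pw Qe sub]]]; exists Q; split => //.
move=> _ [u Qu <-]; apply: sub => //; exact: nbhs_singleton.
Qed.

Lemma section_nbhs2 (T : topologicalType) (mul : T -> T -> T) e x (W : set T) :
  continuous (fun p : T * T => mul p.1 p.2) -> nbhs (mul e x) W ->
  exists U, nbhs e U /\ rmulset mul U x `<=` W.
Proof.
move=> c /(@mul_nbhs _ _ _ _ _ c) [P [Q [Pe Qx sub]]]; exists P; split => //.
move=> _ [u Pu <-]; apply: sub => //; exact: nbhs_singleton.
Qed.

Theorem proposition5p7 (T : topologicalType) (mul : T -> T -> T) (e : T) :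
  topological_semigroup mul ->
  balanced_open_right_unit mul e ->
  [/\ open_left_shifts mul, open_right_shifts mul &
      (accessible_space T ->
         [/\ open_left_unit mul e, left_unit mul e /\ right_unit mul e
           & balanced_point mul e])].
Proof.
move=> [assoc c] [[ru oru] bal].
have key : forall w (W : set T), open W -> W w ->
    exists V, [/\ open V, V e, Defs.invariant mul V & lmulset mul w V `<=` W].
  move=> w W oW Ww.
  have hW : nbhs (mul w e) W by rewrite ru; exact: open_nbhs_nbhs.
  have [U [Ue sU]] := @section_nbhs _ _ _ _ _ c hW.
  have [V [oV Ve iV VU]] := bal U Ue.
  exists V; split => //; move=> _ [v Vv <-]; apply: sU; exists v => //; exact: VU.
have lnbhs : forall x (V : set T), open V -> V e -> nbhs x (lmulset mul x V).
  move=> x V oV Ve; apply: oru; exact: open_nbhs_nbhs.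
split.
- move=> a W oW; rewrite openE => _ [w Ww <-].
  have [V [oV Ve iV sV]] := key w W oW Ww.
  apply: filterS (lnbhs (mul a w) V oV Ve).
  move=> _ [v Vv <-]; exists (mul w v); first by apply: sV; exists v.
  by rewrite assoc.
- move=> a W oW; rewrite openE => _ [w Ww <-].
  have [V [oV Ve iV sV]] := key w W oW Ww.
  apply: filterS (lnbhs (mul w a) V oV Ve).
  move=> _ [v Vv <-].
  have : rmulset mul V a (mul a v) by rewrite -iV; exists v.
  move=> [u Vu uva]; exists (mul w u); first by apply: sV; exists u.
  by rewrite -assoc uva assoc.
- move=> acc.
  have olu : forall U x, nbhs e U -> nbhs x (rmulset mul U x).
    move=> U x Ue; have [V [oV Ve iV VU]] := bal U Ue.
    apply: filterS (lnbhs x V oV Ve); rewrite iV.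
    move=> _ [v Vv <-]; exists v => //; exact: VU.
  have lu : left_unit mul e.
    move=> x; apply/eqP; apply/negPn/negP => neq.
    have [A [oA Aex Ax]] := acc _ _ neq.
    have hA : nbhs (mul e x) A by apply: open_nbhs_nbhs; split => //; exact/set_mem.
    have [U [Ue sU]] := @section_nbhs2 _ _ _ _ _ c hA.
    have [V [oV Ve iV VU]] := bal U Ue.
    have : rmulset mul V x x by rewrite -iV; exists e => //.
    move=> [v Vv vx]; move: Ax; rewrite inE /= => Ax; apply: Ax.
    rewrite -vx; apply: sU; exists v => //; exact: VU.
  by split; [exact: (conj lu olu) | exact: (conj lu ru) | exact: bal].
Qed.
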